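(* Let $m,n\ge0$ with $m+n\ge1$ and $r,s\ge 0$ with $r+s\ge 1$. Then the Lie superalgebra $H(m,n)\oplus A(r\mid s)$ is capable if and only if $m=1$ and $n=0$.
   Context: All algebras are over a field $\mathbb{F}$ of characteristic $\neq 2,3$. $A(r\mid s)$ is the abelian Lie superalgebra of dimension $(r\mid s)$. $H(m,n)$ is the Lie superalgebra with even basis $x_1,\dots,x_{2m},z$, odd basis $y_1,\dots,y_n$, and nonzero brackets $[x_i,x_{m+i}]=z$ ($1\le i\le m$), $[y_j,y_j]=z$ ($1\le j\le n$). $\oplus$ is the direct sum of Lie superalgebras. A Lie superalgebra $L$ is capable if $L\cong H/Z(H)$ for some Lie superalgebra $H$. *)

(* Defs.v *)
From HB Require Import structures.
From mathcomp Require Import all_boot all_order all_algebra.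
Set Implicit Arguments. Unset Strict Implicit. Unset Printing Implicit Defensive.
Import Order.TTheory GRing.Theory Num.Theory.
Local Open Scope ring_scope.

(* Data of a Lie superalgebra L = L0 (+) L1 over F, given by its even part,
   odd part and the three homogeneous components of the bracket:
     b00 : L0 x L0 -> L0,  b01 : L0 x L1 -> L1 ([x,u]),  b11 : L1 x L1 -> L0.
   The remaining component [u,x] = -[x,u] (u odd, x even) is determined by
   super-antisymmetry. *)
Record lsData (F : fieldType) := LSData {
  ev : lmodType F;
  od : lmodType F;
  b00 : ev -> ev -> ev;
  b01 : ev -> od -> od;
  b11 : od -> od -> ev }.

Definition bilin (F : fieldType) (U V W : lmodType F) (f : U -> V -> W) : Prop :=
  (forall (a : F) x x' y, f (a *: x + x') y = a *: f x y + f x' y) /\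
  (forall (a : F) x y y', f x (a *: y + y') = a *: f x y + f x y').

Definition lin (F : fieldType) (U V : lmodType F) (f : U -> V) : Prop :=
  forall (a : F) x y, f (a *: x + y) = a *: f x + f y.

Definition isLieSuper (F : fieldType) (L : lsData F) : Prop :=
  bilin (@b00 F L) /\ bilin (@b01 F L) /\ bilin (@b11 F L) /\
      (forall x y : ev L, b00 x y = - b00 y x) /\
      (forall u v, @b11 F L u v = b11 v u) /\
      (forall x y z, @b00 F L x (b00 y z) + b00 y (b00 z x) + b00 z (b00 x y) = 0) /\
      (forall x y (u : od L), b01 x (b01 y u) - b01 y (b01 x u) = b01 (b00 x y) u) /\
      (forall x (u v : od L), b00 x (b11 u v) = b11 (b01 x u) v + b11 u (b01 x v)) /\
      (forall (u v w : od L),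
         b01 (b11 v w) u + b01 (b11 w u) v + b01 (b11 u v) w = 0).

Definition center_ev (F : fieldType) (L : lsData F) (x : ev L) : Prop :=
  (forall y, b00 x y = 0) /\ (forall u : od L, b01 x u = 0).
Definition center_od (F : fieldType) (L : lsData F) (u : od L) : Prop :=
  (forall x : ev L, b01 x u = 0) /\ (forall v, b11 u v = 0).

(* L is capable iff L ~= H / Z(H) for some Lie superalgebra H over F,
   i.e. (first isomorphism theorem) there is a surjective homomorphism of
   Lie superalgebras H -> L (even and odd parts) whose kernel is Z(H). *)
Definition capable (F : fieldType) (L : lsData F) : Prop :=
  exists (H : lsData F), isLieSuper H /\
  exists (f0 : ev H -> ev L) (f1 : od H -> od L),
    lin f0 /\ lin f1 /\
    (forall y, exists x, f0 x = y) /\ (forall v, exists u, f1 u = v) /\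
    (forall x y, f0 (b00 x y) = b00 (f0 x) (f0 y)) /\
    (forall x u, f1 (b01 x u) = b01 (f0 x) (f1 u)) /\
    (forall u v, f0 (b11 u v) = b11 (f1 u) (f1 v)) /\
    (forall x, f0 x = 0 <-> center_ev x) /\
    (forall u, f1 u = 0 <-> center_od u).

Definition lsSum (F : fieldType) (A B : lsData F) : lsData F :=
  @LSData F (ev A * ev B)%type (od A * od B)%type
    (fun x y => (b00 x.1 y.1, b00 x.2 y.2))
    (fun x u => (b01 x.1 u.1, b01 x.2 u.2))
    (fun u v => (b11 u.1 v.1, b11 u.2 v.2)).

(* Heisenberg superalgebra H(m,n): even part F^(2m+1) with coordinates
   x_1..x_2m at indices 0..2m-1 and z at index 2m (= ord_max); odd part F^n
   with basis y_1..y_n.  Brackets [x_i,x_{m+i}] = z, [y_j,y_j] = z. *)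
Definition zvec (F : fieldType) (m : nat) (c : F) : 'rV[F]_(m.*2).+1 :=
  c *: delta_mx 0 ord_max.

Definition heis (F : fieldType) (m n : nat) : lsData F :=
  @LSData F 'rV[F]_(m.*2).+1 'rV[F]_n
    (fun a b => zvec m (\sum_(i < m)
        (a 0 (inord i) * b 0 (inord (m + i)) - a 0 (inord (m + i)) * b 0 (inord i))))
    (fun _ _ => 0)
    (fun u v => zvec m (\sum_(j < n) u 0 j * v 0 j)).

Definition abel (F : fieldType) (r s : nat) : lsData F :=
  @LSData F 'rV[F]_r 'rV[F]_s (fun _ _ => 0) (fun _ _ => 0) (fun _ _ => 0).

(* Main.v *)
Require Import Defs.
From mathcomp Require Import all_boot all_order all_algebra.
From mathcomp Require Import ring zify.
Import GRing.Theory.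
Local Open Scope ring_scope.

Section Abs.
Variables (F : fieldType) (L H : lsData F).
Hypothesis HH : isLieSuper H.
Variables (f0 : ev H -> ev L) (f1 : od H -> od L).
Hypotheses (hl0 : lin f0) (hl1 : lin f1)
  (hs0 : forall y, exists x, f0 x = y) (hs1 : forall v, exists u, f1 u = v)
  (h00 : forall x y, f0 (b00 x y) = b00 (f0 x) (f0 y))
  (h01 : forall x u, f1 (b01 x u) = b01 (f0 x) (f1 u))
  (h11 : forall u v, f0 (b11 u v) = b11 (f1 u) (f1 v))
  (hk0 : forall x, f0 x = 0 <-> center_ev x)
  (hk1 : forall u, f1 u = 0 <-> center_od u).

Let B00 := (proj1 HH).
Let B01 := (proj1 (proj2 HH)).
Let B11 := (proj1 (proj2 (proj2 HH))).
Let AS := (proj1 (proj2 (proj2 (proj2 HH)))).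
Let SY := (proj1 (proj2 (proj2 (proj2 (proj2 HH))))).
Let J3 := (proj1 (proj2 (proj2 (proj2 (proj2 (proj2 HH)))))).
Let J2 := (proj1 (proj2 (proj2 (proj2 (proj2 (proj2 (proj2 HH))))))).
Let J1 := (proj1 (proj2 (proj2 (proj2 (proj2 (proj2 (proj2 (proj2 HH)))))))).
Let J0 := (proj2 (proj2 (proj2 (proj2 (proj2 (proj2 (proj2 (proj2 HH)))))))).

Lemma diff0 (P Q : ev H) : f0 P = f0 Q -> f0 ((-1) *: Q + P) = 0.
Proof. by move=> e; rewrite hl0 e scaleN1r addNr. Qed.
Lemma diff1 (P Q : od H) : f1 P = f1 Q -> f1 ((-1) *: Q + P) = 0.
Proof. by move=> e; rewrite hl1 e scaleN1r addNr. Qed.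

Lemma wd00 P Q Y : f0 P = f0 Q -> b00 P Y = b00 Q Y.
Proof.
move=> /diff0 /hk0 [c _]; have := c Y.
by rewrite (proj1 B00) scaleN1r => /eqP; rewrite addrC subr_eq0 => /eqP.
Qed.
Lemma wd00r P Q Y : f0 P = f0 Q -> b00 Y P = b00 Y Q.
Proof. by move=> e; rewrite AS (wd00 _ _ _ e) -AS. Qed.
Lemma wd01 P Q U : f0 P = f0 Q -> b01 P U = b01 Q U.
Proof.
move=> /diff0 /hk0 [_ c]; have := c U.
by rewrite (proj1 B01) scaleN1r => /eqP; rewrite addrC subr_eq0 => /eqP.
Qed.
Lemma wd01r P U V : f1 U = f1 V -> b01 P U = b01 P V.
Proof.
move=> /diff1 /hk1 [c _]; have := c P.
by rewrite (proj2 B01) scaleN1r => /eqP; rewrite addrC subr_eq0 => /eqP.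
Qed.

Lemma core00 P Q Y : f0 (b00 Q Y) = 0 -> f0 (b00 Y P) = 0 -> b00 (b00 P Q) Y = 0.
Proof.
move=> /hk0 [c1 _] /hk0 [c2 _].
have := J3 Y P Q.
rewrite (AS P (b00 Q Y)) c1 oppr0 (AS Q (b00 Y P)) c2 oppr0 !addr0 => e.
by rewrite AS e oppr0.
Qed.

Hypothesis Lb01 : forall (x : ev L) (u : od L), b01 x u = 0.

Lemma core01 (P Q : ev H) (U : od H) : b01 (b00 P Q) U = 0.
Proof.
rewrite -J2.
have c : forall R, center_od (b01 R U) by move=> R; apply/hk1; rewrite h01 Lb01.
by rewrite (proj1 (c Q)) (proj1 (c P)) subrr.
Qed.

Lemma noncapB (x1 x1' x2 x2' : ev L) :
  b00 x2 x2' = b00 x1 x1' -> b00 x2 x2' != 0 ->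
  (forall y, exists a b y1, y = a *: x1 + (b *: x1' + y1) /\ b00 x1' y1 = 0 /\ b00 y1 x1 = 0) ->
  b00 x2' x1 = 0 -> b00 x1 x2 = 0 -> b00 x2' x1' = 0 -> b00 x1' x2 = 0 -> False.
Proof.
move=> e12 nz dec a1 a2 a3 a4.
have [X1 eX1] := hs0 x1; have [X1' eX1'] := hs0 x1'.
have [X2 eX2] := hs0 x2; have [X2' eX2'] := hs0 x2'.
set Z := b00 X2 X2'.
suff : f0 Z = 0 by rewrite /Z h00 eX2 eX2' => e; rewrite e eqxx in nz.
apply/hk0; split; last by move=> U; apply: core01.
move=> Y; have [a [b [y1 [ey [b1 b2]]]]] := dec (f0 Y).
have [Y1 eY1] := hs0 y1.
have eY : f0 Y = f0 (a *: X1 + (b *: X1' + Y1)) by rewrite !hl0 eX1 eX1' eY1.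
rewrite (wd00r _ _ _ eY) !(proj2 B00).
rewrite /Z core00 ?h00 ?eX1 ?eX2 ?eX2' //.
rewrite core00 ?h00 ?eX1' ?eX2 ?eX2' //.
have eZ : f0 Z = f0 (b00 X1 X1') by rewrite /Z !h00 eX1 eX1' eX2 eX2'.
rewrite (wd00 _ _ _ eZ) core00 ?h00 ?eX1 ?eX1' ?eY1 //.
by rewrite !scaler0 !addr0.
Qed.

Lemma noncapA (u1 : od L) : (3%:R : F) != 0 ->
  b11 u1 u1 != 0 ->
  (forall v, exists c, b11 u1 ((-c) *: u1 + v) = 0) -> False.
Proof.
move=> h3 nz dec.
have [U1 eU1] := hs1 u1.
set Z := b11 U1 U1.
suff : f0 Z = 0 by rewrite /Z h11 eU1 => e; rewrite e eqxx in nz.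
apply/hk0; split.
  move=> Y; rewrite AS J1.
  have c : center_od (b01 Y U1) by apply/hk1; rewrite h01 Lb01.
  by rewrite (proj2 c) SY (proj2 c) addr0 oppr0.
move=> V; have [c ec] := dec (f1 V).
set V' := (-c) *: U1 + V.
have cc : center_ev (b11 U1 V') by apply/hk0; rewrite h11 /V' hl1 eU1.
have zV' : b01 Z V' = 0.
  have := J0 V' U1 U1; rewrite (proj2 cc) SY (proj2 cc) !addr0.
  done.
have zU : b01 Z U1 = 0.
  have e3 : (3%:R : F) *: b01 Z U1 = 0.
    by rewrite scaler_nat !mulrSr mulr0n add0r; apply: J0.
  by move: e3 => /eqP; rewrite scaler_eq0 (negbTE h3) /= => /eqP.
have -> : V = c *: U1 + V' by rewrite /V' addrA -scalerDl addrN scale0r add0r.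
by rewrite (proj2 B01) zU zV' scaler0 addr0.
Qed.
End Abs.
Section S.
Variable F : fieldType.

Lemma zvec_nz m : zvec m (1 : F) != 0.
Proof.
apply/eqP => /rowP /(_ ord_max); rewrite !mxE !eqxx /= mul1r => /eqP.
by rewrite oner_eq0.
Qed.

Lemma pair_nz (A B : lmodType F) (a : A) (b : B) : a != 0 -> ((a, b) : (A * B)%type) != 0.
Proof. by move=> nz; apply/eqP => /(congr1 fst) /= e; rewrite e eqxx in nz. Qed.

Lemma Lb01 m n r s (x : ev (lsSum (heis F m n) (abel F r s))) u : b01 x u = 0.
Proof. by []. Qed.

Lemma sum_delta n (j0 : 'I_n) (v : 'rV[F]_n) :
  \sum_j (delta_mx 0 j0 : 'rV[F]_n) 0 j * v 0 j = v 0 j0.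
Proof.
rewrite (bigD1 j0) //= mxE !eqxx mul1r big1 ?addr0 // => j nj.
by rewrite mxE (negbTE nj) andbF mul0r.
Qed.

Lemma condA m n r s : (0 < n)%N -> exists u1 : od (lsSum (heis F m n) (abel F r s)),
  b11 u1 u1 != 0 /\ (forall v, exists c, b11 u1 ((-c) *: u1 + v) = 0).
Proof.
case: n => // n _.
exists (delta_mx 0 ord0, 0); split.
  rewrite /= sum_delta mxE !eqxx /=; exact: pair_nz (zvec_nz m).
move=> v; exists (v.1 0 ord0) => /=.
rewrite sum_delta !mxE !eqxx /= mulr1 addNr /zvec scale0r.
by [].
Qed.
End S.
Section S3.
Variable F : fieldType.
Variable m : nat.
Definition ee k : 'rV[F]_(m.*2).+1 := delta_mx 0 (inord k).
Definition om (a b : 'rV[F]_(m.*2).+1) := \sum_(i < m)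
        (a 0 (inord i) * b 0 (inord (m + i)) - a 0 (inord (m + i)) * b 0 (inord i)).

Lemma eeE k j : (k <= m.*2)%N -> (j <= m.*2)%N -> ee k 0 (inord j) = (k == j)%:R.
Proof.
move=> hk hj; rewrite mxE /= -val_eqE /= !inordK //; by rewrite eq_sym.
Qed.

Lemma sum_dirac (k : nat) (G : nat -> F) : (k < m)%N ->
  \sum_(i < m) (k == i)%:R * G i = G k.
Proof.
move=> hk; rewrite (bigD1 (Ordinal hk)) //= eqxx mul1r big1 ?addr0 //.
by move=> i; rewrite -val_eqE /= eq_sym => /negbTE ->; rewrite mul0r.
Qed.

Lemma om_el k b : (k < m)%N -> om (ee k) b = b 0 (inord (m + k)).
Proof.
move=> hk; rewrite /om -(sum_dirac k (fun i => b 0 (inord (m + i))) hk).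
apply: eq_bigr => i _; have hi := ltn_ord i; rewrite !eeE; try lia.
have -> : (k == m + i)%N = false by apply/eqP; lia.
by rewrite mul0r subr0.
Qed.

Lemma om_er k b : (k < m)%N -> om (ee (m + k)) b = - b 0 (inord k).
Proof.
move=> hk; rewrite /om -(sum_dirac k (fun i => b 0 (inord i)) hk) -sumrN.
apply: eq_bigr => i _; have hi := ltn_ord i; rewrite !eeE; try lia.
have -> : (m + k == i)%N = false by apply/eqP; lia.
by rewrite eqn_add2l mul0r sub0r.
Qed.

Lemma om_anti a b : om a b = - om b a.
Proof. rewrite /om -sumrN; apply: eq_bigr => i _; ring. Qed.
End S3.

Section SB.
Variable F : fieldType.

Lemma om_er0 m b : (0 < m)%N -> om F m (ee F m m) b = - b 0 (inord 0).
Proof. by move=> h; have := @om_er F m 0 b h; rewrite addn0. Qed.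
Lemma om_el0 m b : (0 < m)%N -> om F m (ee F m 0) b = b 0 (inord m).
Proof. by move=> h; rewrite om_el // addn0. Qed.

Lemma inord_eqE n j k : (j <= n)%N -> (k <= n)%N -> ((inord j : 'I_n.+1) == inord k) = (j == k).
Proof. by move=> hj hk; rewrite -val_eqE /= !inordK. Qed.

Lemma grp (V : zmodType) (p q y : V) : y = p + (q + (-p + (-q + y))).
Proof. by rewrite (addrCA q) addNKr addNKr. Qed.

Lemma condB m n r s : (2 <= m)%N -> exists x1 x1' x2 x2' : ev (lsSum (heis F m n) (abel F r s)),
  [/\ b00 x2 x2' = b00 x1 x1', b00 x2 x2' != 0,
  (forall y, exists a b y1, y = a *: x1 + (b *: x1' + y1) /\ b00 x1' y1 = 0 /\ b00 y1 x1 = 0) &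
  [/\ b00 x2' x1 = 0, b00 x1 x2 = 0, b00 x2' x1' = 0 & b00 x1' x2 = 0]].
Proof.
move=> hm.
have bL : forall x y : ev (lsSum (heis F m n) (abel F r s)),
   b00 x y = (zvec m (om F m x.1 y.1), 0) by [].
have z0 : forall c : F, c = 0 -> ((zvec m c, 0) : ev (lsSum (heis F m n) (abel F r s))) = 0.
  by move=> c ->; rewrite /zvec scale0r.
have m0 : (0 < m)%N by lia.
have m1 : (1 < m)%N by lia.
have ne : forall a b : nat, a <> b -> (a == b)%N = false by move=> a b h; apply/eqP.
exists (ee F m 0, 0), (ee F m m, 0), (ee F m 1, 0), (ee F m (m + 1), 0).
have v1 : om F m (ee F m 1) (ee F m (m + 1)) = 1.
  by rewrite om_el // eeE; [rewrite eqxx | lia | lia].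
have v2 : om F m (ee F m 0) (ee F m m) = 1.
  by rewrite om_el0 // eeE; [rewrite eqxx | lia | lia].
split.
- by rewrite !bL /= v1 v2.
- by rewrite bL /= v1; apply: pair_nz; apply: zvec_nz.
- move=> y; exists (y.1 0 (inord 0)), (y.1 0 (inord m)).
  exists ((- y.1 0 (inord 0)) *: (ee F m 0, 0) + ((- y.1 0 (inord m)) *: (ee F m m, 0) + y)).
  split; first by rewrite !scaleNr; apply: grp.
  split.
    rewrite bL /= om_er0 // !mxE /= !inord_eqE; try lia.
    rewrite (ne 0%N m) ?eqxx; last lia.
    by apply: z0; rewrite /=; ring.
  rewrite bL /= om_anti om_el0 // !mxE /= !inord_eqE; try lia.
  rewrite (ne m 0%N) ?eqxx; last lia.
  by apply: z0; rewrite /=; ring.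
- split.
  + rewrite bL /= om_er // eeE ?(ne 0%N 1%N) //; try lia.
    by apply: z0; rewrite /= oppr0.
  + rewrite bL /= om_el0 // eeE ?(ne 1%N m) //; try lia.
    by apply: z0.
  + rewrite bL /= om_er // eeE ?(ne m 1%N) //; try lia.
    by apply: z0; rewrite /= oppr0.
  + rewrite bL /= om_er0 // eeE ?(ne 1%N 0%N) //; try lia.
    by apply: z0; rewrite /= oppr0.
Qed.
End SB.

Lemma pair_ext (A B : Type) (x y : A * B) : x.1 = y.1 -> x.2 = y.2 -> x = y.
Proof. by case: x; case: y => ? ? ? ? /= -> ->. Qed.

Section SC.
Variables (F : fieldType) (r s : nat).
Notation L := (lsSum (heis F 1 0) (abel F r s)).
Definition i0 : 'I_(1.*2).+1 := inord 0.
Definition i1 : 'I_(1.*2).+1 := inord 1.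
Definition i2 : 'I_(1.*2).+1 := ord_max.

Definition w00 (X Y : ev L) : ('rV[F]_1 * 'rV[F]_1 * 'rV[F]_r)%type :=
  (const_mx (X.1 0 i0 * Y.1 0 i2 - X.1 0 i2 * Y.1 0 i0),
   const_mx (X.1 0 i1 * Y.1 0 i2 - X.1 0 i2 * Y.1 0 i1),
   X.1 0 i0 *: Y.2 - Y.1 0 i0 *: X.2).
Definition w01 (X : ev L) (U : od L) : 'rV[F]_s := X.1 0 i0 *: U.2.

Definition HC : lsData F :=
  @LSData F (ev L * ('rV[F]_1 * 'rV[F]_1 * 'rV[F]_r))%type (od L * 'rV[F]_s)%type
    (fun X Y => (b00 X.1 Y.1, w00 X.1 Y.1))
    (fun X U => (b01 X.1 U.1, w01 X.1 U.1))
    (fun U V => (b11 U.1 V.1, 0)).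

Lemma e01 : (i0 == i2) = false. Proof. by rewrite -val_eqE /= inordK. Qed.
Lemma e11 : (i1 == i2) = false. Proof. by rewrite -val_eqE /= inordK. Qed.
Lemma e02 : (i0 == i1) = false. Proof. by rewrite -val_eqE /= !inordK. Qed.
Lemma e12 : (i1 == i0) = false. Proof. by rewrite -val_eqE /= !inordK. Qed.
Lemma e21 : (i2 == i1) = false. Proof. by rewrite -val_eqE /= inordK. Qed.
Lemma a10 : (inord (1 + 0) : 'I_(1.*2).+1) = i1. Proof. by []. Qed.

Ltac psplit := repeat (apply: pair_ext; rewrite /=).
Ltac leaf := let j := fresh "j" in apply/rowP => j;
  rewrite ?big_ord1 ?big_ord0 !mxE /= ?a10 -/i0 -/i2 ?e01 ?e11 ?eqxx /=.

Lemma HC_lie : isLieSuper HC.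
Proof.
rewrite /isLieSuper /bilin /=.
repeat split.
all: intros; rewrite /w00 /w01 /zvec; psplit; try (leaf; try ring).
all: try (by move: (ltn_ord j)).
Qed.

Lemma ring0 (a b c : F) : a = c * b -> b = 0 -> a = 0.
Proof. by move=> -> ->; rewrite mulr0. Qed.

Lemma ord3 (j : 'I_(1.*2).+1) : j = i0 \/ j = i1 \/ j = i2.
Proof.
case: j => -[|[|[|k]]] hk.
- by left; apply: val_inj; rewrite /= inordK.
- by right; left; apply: val_inj; rewrite /= inordK.
- by right; right; apply: val_inj.
- by [].
Qed.

Lemma cap10 : capable L.
Proof.
exists HC; split; first exact: HC_lie.
exists (fun X : ev HC => X.1), (fun U : od HC => U.1).
split; first by [].
split; first by [].
split; first by move=> y; exists (y, 0).
split; first by move=> v; exists (v, 0).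
split; first by [].
split; first by [].
split; first by [].
split.
  move=> [x c]; split => /=.
    move=> ->; split => y /=; rewrite /w00 /w01 /zvec; psplit; leaf; ring.
  move=> [c1 c2].
  set Yx : ev HC := ((delta_mx 0 i0, 0), 0).
  set Yy : ev HC := ((delta_mx 0 i1, 0), 0).
  have E1 := congr1 (fun p : ev HC => p.1.1 0 i2) (c1 Yy).
  have E2 := congr1 (fun p : ev HC => p.1.1 0 i2) (c1 Yx).
  have E3 := congr1 (fun p : ev HC => p.2.1.2 0 0) (c1 Yy).
  have E4 := fun j => congr1 (fun p : ev HC => p.2.2 0 j) (c1 Yx).
  move: E1 E2 E3 E4; rewrite /= /w00 /zvec /= ?big_ord1 !mxE /= ?a10 -/i0 -/i2 ?e01 ?e11 ?e02 ?e12 ?e21 ?eqxx /=.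
  move=> E1 E2 E3 E4.
  have h0 : x.1 0 i0 = 0 by apply: (@ring0 _ _ (1) _ E1); ring.
  have h1 : x.1 0 i1 = 0 by apply: (@ring0 _ _ (-1) _ E2); ring.
  have h2 : x.1 0 i2 = 0 by apply: (@ring0 _ _ (-1) _ E3); ring.
  have h3 : forall j, x.2 0 j = 0.
    by move=> j; have := E4 j; rewrite !mxE => e; apply: (@ring0 _ _ (-1) _ e); ring.
  psplit; apply/rowP => j; rewrite !mxE //.
  by case: (ord3 j) => [->|[->|->]].
move=> [[u0 v] c] /=; split.
  move=> ->; split => y /=; rewrite /w00 /w01 /zvec; psplit; leaf; ring.
move=> [c1 c2].
set Yx : ev HC := ((delta_mx 0 i0, 0), 0).
have E := fun j => congr1 (fun p : od HC => p.2 0 j) (c1 Yx).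
move: E; rewrite /= /w01 /=.
move=> E; psplit; apply/rowP => j; rewrite !mxE //.
  by case: j => ? /ltac:(done).
by have := E j; rewrite !mxE /= => e; apply: (@ring0 _ _ (1) _ e); rewrite eqxx /=; ring.
Qed.
End SC.

Theorem mainTheorem4 (F : fieldType) (hF2 : 2%:R != 0 :> F) (hF3 : 3%:R != 0 :> F)
  (m n r s : nat) (hmn : (1 <= m + n)%N) (hrs : (1 <= r + s)%N) :
  capable (lsSum (heis F m n) (abel F r s)) <-> (m = 1%N /\ n = 0%N).
Proof.
split; last by move=> [-> ->]; exact: cap10.
move=> [H [HH [f0 [f1 [hl0 [hl1 [hs0 [hs1 [h00 [h01 [h11 [hk0 hk1]]]]]]]]]]]].
have Lb := @Lb01 F m n r s.
have [n0|npos] := posnP n.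
  subst n.
  have [m1|m2] : m = 1%N \/ (1 < m)%N by lia.
    by [].
  have [x1 [x1' [x2 [x2' [a b c [d e f g]]]]]] := @condB F m 0 r s m2.
  exfalso; exact: (@noncapB F _ H HH f0 f1 hl0 hs0 h00 h01 hk0 hk1 Lb x1 x1' x2 x2' a b c d e f g).
have [u1 [nz dec]] := @condA F m n r s npos.
exfalso; exact: (@noncapA F _ H HH f0 f1 hl1 hs1 h01 h11 hk0 hk1 Lb u1 hF3 nz dec).
Qed.
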